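(* Let $p$ be the POP of length 4 defined by the relations $1>2$, $1>3$ and $4>3$; equivalently, avoiding $p$ means simultaneously avoiding the patterns $4312, 4213, 3214, 4123, 3124$. Let $a(n)=|S_n(p)|$. Then $a(0)=a(1)=1$, and for $n\geq 2$, $a(n)=4a(n-1)-3a(n-2)+1$, so that $$a(n)=\frac{3^n-2n+3}{4}\quad(n\geq 0).$$ Moreover, $$\sum_{n\geq 0}a(n)x^n=\frac{(1-2x)^2}{(1-3x)(1-x)^2}.$$
   Context: An $n$-permutation is a word $\pi=\pi_1\cdots\pi_n$ containing each of $1,\ldots,n$ exactly once; $S_n$ is the set of $n$-permutations ($S_0$ consists of the empty permutation). A partially ordered pattern (POP) $p$ of length $k$ is a partial order on the label set $\{1,\ldots,k\}$; it is described by a set of generating relations, where a relation $x>y$ means that in an occurrence the entry in the $x$-th chosen position must be larger than the entry in the $y$-th chosen position, and labels not involved in any relation are unconstrained. An $n$-permutation $\pi$ contains $p$ if there are indices $1\leq i_1<\cdots<i_k\leq n$ such that $\pi_{i_x}>\pi_{i_y}$ whenever $x>y$ in the partial order; otherwise $\pi$ avoids $p$. $S_n(p)$ denotes the set of $n$-permutations avoiding $p$. A permutation $\pi$ avoids a classical pattern $q$ if it has no subsequence order-isomorphic to $q$. *)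

(* Defs.v *)
From HB Require Import structures.
From mathcomp Require Import all_boot all_order all_algebra all_fingroup.
Set Implicit Arguments. Unset Strict Implicit. Unset Printing Implicit Defensive.
Import Order.TTheory GRing.Theory Num.Theory.

(* An n-permutation pi_1...pi_n is modelled as s : 'S_n = {perm 'I_n};
   position i (0-based) carries the value s i (0-based). Shifting positions
   and values by one does not affect any order relation. *)

Definition incr_pos (k n : nat) (f : {ffun 'I_k -> 'I_n}) : bool :=
  [forall a : 'I_k, forall b : 'I_k, (a < b)%N ==> (f a < f b)%N].

(* A POP of length k is given by a list of generating relations (x, y),
   1-based labels in {1..k}, each meaning "x > y". *)
Definition pop_contains (k : nat) (rels : seq (nat * nat)) (n : nat)
    (s : 'S_n) : bool :=
  [exists f : {ffun 'I_k -> 'I_n},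
     incr_pos f &&
     [forall a : 'I_k, forall b : 'I_k,
        ((a.+1, b.+1) \in rels) ==> (s (f b) < s (f a))%N]].

Definition pop_avoids k rels n (s : 'S_n) : bool := ~~ pop_contains k rels s.

(* Classical pattern q, given as a word (a permutation of 1..size q). *)
Definition pat_contains (q : seq nat) (n : nat) (s : 'S_n) : bool :=
  [exists f : {ffun 'I_(size q) -> 'I_n},
     incr_pos f &&
     [forall a : 'I_(size q), forall b : 'I_(size q),
        (s (f a) < s (f b))%N == (nth 0 q a < nth 0 q b)%N]].

Definition pat_avoids q n (s : 'S_n) : bool := ~~ pat_contains q s.

Definition popP : seq (nat * nat) := [:: (1, 2); (1, 3); (4, 3)].

Definition a_cnt (n : nat) : nat := #|[set s : 'S_n | pop_avoids 4 popP s]|.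

(* Main.v *)
Require Import Defs.
From HB Require Import structures.
From mathcomp Require Import all_boot all_order all_algebra all_fingroup.
From mathcomp Require Import zify ring lra.
Import Order.TTheory GRing.Theory Num.Theory.

Set Implicit Arguments. Unset Strict Implicit. Unset Printing Implicit Defensive.


Fixpoint has2 (x : nat) (s : seq nat) : bool :=
  if s is y :: s' then ((y < x) && has (fun z => y < z) s') || has2 x s' else false.
Fixpoint has3 (x : nat) (s : seq nat) : bool :=
  if s is y :: s' then ((y < x) && has2 x s') || has3 x s' else false.
Fixpoint occ (s : seq nat) : bool :=
  if s is y :: s' then has3 y s' || occ s' else false.

Lemma has2_mono x x' s : x <= x' -> has2 x s -> has2 x' s.
Proof.
move=> le; elim: s => //= y s IH /orP[/andP[yx h]|h]; apply/orP.
  by left; rewrite h andbT; exact: leq_trans yx le.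
by right; exact: IH.
Qed.

Lemma has3_mono x x' s : x <= x' -> has3 x s -> has3 x' s.
Proof.
move=> le; elim: s => //= y s IH /orP[/andP[yx h]|h]; apply/orP.
  by left; rewrite (has2_mono le h) andbT; exact: leq_trans yx le.
by right; exact: IH.
Qed.

Lemma has3_has2 x s : has3 x s -> has2 x s.
Proof.
elim: s => //= y s IH /orP[/andP[yx h]|h]; apply/orP; right => //; exact: IH.
Qed.

Lemma has2_max a b s : has2 (maxn a b) s = has2 a s || has2 b s.
Proof.
case: (leqP a b) => ab.
 apply/idP/idP => [->|/orP[h|//]]; first by rewrite orbT.
  exact: has2_mono h.
 apply/idP/idP => [->//|/orP[//|h]].
exact: has2_mono (ltnW ab) h.
Qed.

Lemma has2_0 s : has2 0 s = false. Proof. by elim: s. Qed.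
Lemma has3_0 s : has3 0 s = false. Proof. by elim: s. Qed.

Fixpoint permsn (k : nat) (S : seq nat) : seq (seq nat) :=
  if k is k'.+1 then [seq w :: t | w <- S, t <- permsn k' (rem w S)] else [:: [::]].

Lemma count_permsn P k S :
  count P (permsn k.+1 S) = \sum_(w <- S) count (fun t => P (w :: t)) (permsn k (rem w S)).
Proof.
rewrite /= /allpairs_dep count_flatten -map_comp sumnE big_map.
apply: eq_bigr => w _ /=. by rewrite count_map.
Qed.

Lemma mem_permsn k S t : uniq S -> size S = k -> (t \in permsn k S) = perm_eq t S.
Proof.
elim: k S t => [|k IH] S t uS sS.
  case: S uS sS => // _ _; rewrite /= inE.
  by case: t => [|x t] //; apply/esym/negP => /perm_size.
apply/idP/idP.
  move=> /allpairsPdep[w [t' [wS t'in ->]]].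
  have h := IH (rem w S) t' (rem_uniq w uS); rewrite size_rem // sS /= in h.
  rewrite (h erefl) in t'in.
  by rewrite (permPr (perm_to_rem wS)) perm_cons.
case: t => [|w t'] pe; first by have := perm_size pe; rewrite sS.
have wS : w \in S by rewrite -(perm_mem pe) inE eqxx.
apply/allpairsPdep; exists w, t'; split => //.
rewrite IH ?rem_uniq ?size_rem ?sS //.
by rewrite (permPr (perm_to_rem wS)) perm_cons in pe.
Qed.

Lemma uniq_permsn k S : uniq S -> uniq (permsn k S).
Proof.
elim: k S => [|k IH] S uS //=.
apply: allpairs_uniq_dep => // [w wS|]; first exact/IH/rem_uniq.
by move=> [a b] [c d] _ _ /= [e1 e2]; subst.
Qed.

Definition rk (S : seq nat) (a : nat) := count (fun x => x < a) S.

Lemma sum_rank_sorted (F : nat -> nat) s : sorted ltn s ->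
  \sum_(w <- s) F (rk s w) = \sum_(r < size s) F r.
Proof.
elim: s F => [|x s IH] F srt; first by rewrite big_nil big_ord0.
have srt' : sorted ltn s := path_sorted srt.
have allx : all (fun y => x < y) s.
  by move: srt; rewrite /= (path_sortedE ltn_trans) => /andP[].
rewrite big_cons big_ord_recl.
have -> : rk (x :: s) x = 0.
  rewrite /rk /= ltnn add0n; apply/eqP; rewrite -leqn0 leqNgt -has_count; apply/hasPn => y ys.
  by rewrite -leqNgt ltnW // (allP allx).
congr (_ + _).
transitivity (\sum_(w <- s) F (rk s w).+1).
  apply: eq_big_seq => y ys; by rewrite /rk /= (allP allx).
by rewrite (IH (fun r => F r.+1)) //; apply: eq_bigr => i _; rewrite /bump.
Qed.

Lemma sum_rank (F : nat -> nat) S : uniq S ->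
  \sum_(w <- S) F (rk S w) = \sum_(r < size S) F r.
Proof.
move=> uS; have pe : perm_eq (sort leq S) S := permEl (perm_sort _ _).
have rkE : rk S =1 rk (sort leq S) by move=> a; rewrite /rk (seq.permP pe).
rewrite -(perm_big _ pe) /= -(perm_size pe).
under eq_bigr do rewrite rkE.
apply: sum_rank_sorted.
by rewrite ltn_sorted_uniq_leq sort_uniq uS sort_sorted //; exact: leq_total.
Qed.

Lemma rk_rem S w x : w \in S -> rk S x = (w < x) + rk (rem w S) x.
Proof. by move=> wS; rewrite /rk (seq.permP (perm_to_rem wS)). Qed.

Lemma rk_remE S w x : w \in S -> rk (rem w S) x = rk S x - (w < x).
Proof. by move=> wS; rewrite (rk_rem x wS) addKn. Qed.

Lemma rk_mono S a b : a <= b -> rk S a <= rk S b.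
Proof. by move=> ab; apply: sub_count => x /= xa; exact: leq_trans xa ab. Qed.

Lemma rk_max S a b : rk S (maxn a b) = maxn (rk S a) (rk S b).
Proof.
case: (leqP a b) => ab.
  by apply/esym/maxn_idPr; exact: rk_mono.
by apply/esym/maxn_idPl; apply: rk_mono; exact: ltnW.
Qed.

Lemma rk_lt S w a : w \in S -> (w < a) = (rk S w < rk S a).
Proof.
move=> wS; case: (ltnP w a) => wa.
  rewrite (rk_rem a wS) (rk_rem w wS) wa ltnn add0n add1n ltnS; symmetry.
  by apply: rk_mono; exact: ltnW.
by apply/esym/negbTE; rewrite -leqNgt; exact: rk_mono.
Qed.

Lemma rk0 S : rk S 0 = 0. Proof. by elim: S. Qed.

Lemma rk_gt S w : uniq S -> w \in S ->
  has (fun z => w < z) (rem w S) = (rk S w < (size S).-1).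
Proof.
move=> uS wS; rewrite (rk_rem w wS) ltnn add0n -(size_rem wS).
have -> : rk (rem w S) w = count (fun z => z <= w) (rem w S).
  apply: eq_in_count => z zin /=; rewrite [z <= w]leq_eqVlt.
  by rewrite (mem_rem_uniq _ uS) inE in zin; case/andP: zin => /negbTE ->.
rewrite has_count -(count_predC (fun z => z <= w) (rem w S)).
have -> : count (predC (fun z => z <= w)) (rem w S) = count (fun z => w < z) (rem w S).
  by apply: eq_count => z /=; rewrite ltnNge.
lia.
Qed.

Definition Pav a b t := ~~ occ t && ~~ has3 a t && ~~ has2 b t.

Fixpoint fcnt (n al be : nat) : nat :=
  if n is m.+1 then
    \sum_(r < n) (if (r < be) && (r < m) then 0
                  else if r < al then fcnt m 0 (maxn al be).-1
                  else fcnt m r (be - (r < be)))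
  else 1.

Lemma Pav_cons a b w t :
  Pav a b (w :: t) = ~~ ((w < b) && has (fun z => w < z) t) &&
    (if w < a then Pav 0 (maxn a b) t else Pav w b t).
Proof.
rewrite /Pav /= has2_max has3_0.
case: (ltnP w a) => wa /=.
  case h2a: (has2 a t); first by rewrite /= !andbF.
  have h3w : has3 w t = false.
    by apply/negbTE/negP => /has3_has2/(has2_mono (ltnW wa)); rewrite h2a.
  have h3a : has3 a t = false.
    by apply/negbTE/negP => /has3_has2; rewrite h2a.
  rewrite h3w h3a /=.
  set c := (w < b) && _.
  by case: c; case: (occ t); case: (has2 b t).
have h : has3 a t -> has3 w t by exact: has3_mono.
case h3w: (has3 w t) => /=; first by rewrite !andbF.
have -> : has3 a t = false by apply/negbTE/negP => /h; rewrite h3w.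
set c := (w < b) && _.
by case: c; case: (occ t); case: (has2 b t).
Qed.

Lemma count_andl (T : Type) (c : bool) (Q : pred T) s :
  count (fun t => c && Q t) s = c * count Q s.
Proof. by case: c => /=; [rewrite mul1n | rewrite mul0n; elim: s]. Qed.

Lemma count_Pav k S a b : uniq S -> size S = k ->
  count (Pav a b) (permsn k S) = fcnt k (rk S a) (rk S b).
Proof.
elim: k S a b => [|k IH] S a b uS sS.
  by case: S uS sS.
rewrite count_permsn.
pose F r := if (r < rk S b) && (r < k) then 0 else if r < rk S a
  then fcnt k 0 (maxn (rk S a) (rk S b)).-1 else fcnt k r (rk S b - (r < rk S b)).
have -> : fcnt k.+1 (rk S a) (rk S b) = \sum_(r < size S) F r by rewrite sS.
rewrite -(sum_rank F uS).
apply: eq_big_seq => w wS.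
have uS' := rem_uniq w uS.
have sS' : size (rem w S) = k by rewrite size_rem // sS.
transitivity (count (fun t => ~~ ((w < b) && has (fun z => w < z) (rem w S)) &&
    (if w < a then Pav 0 (maxn a b) t else Pav w b t)) (permsn k (rem w S))).
  apply: eq_in_count => t tin /=; rewrite Pav_cons.
  rewrite mem_permsn // in tin.
  by rewrite (perm_has _ tin).
rewrite count_andl (rk_gt uS wS) sS /= (rk_lt b wS) (rk_lt a wS) /F.
case: ifP => _; first by rewrite mul0n.
rewrite mul1n; case wa: (rk S w < rk S a).
  rewrite IH // !rk_remE // rk0 rk_max.
  have -> : w < maxn a b by rewrite leq_max (rk_lt a wS) wa.
  by rewrite subn1.
rewrite IH // !rk_remE // ltnn subn0 (rk_lt b wS).
by [].
Qed.


Lemma has2P x t : reflect (exists k l, [/\ k < l < size t, nth 0 t k < x & nth 0 t k < nth 0 t l]) (has2 x t).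
Proof.
apply: (iffP idP).
  elim: t => //= y s IH /orP[/andP[yx /(has_nthP 0)[i ilt hi]]|/IH[k [l [kl h1 h2]]]].
    by exists 0, i.+1; split.
  by exists k.+1, l.+1; split.
elim: t => [|y s IH] [k [l [kl h1 h2]]] /=; first by move: kl; rewrite ltn0 andbF.
case: k kl h1 h2 => [|k] kl h1 h2.
  case: l kl h2 => // l kl h2; apply/orP; left; rewrite h1 /=.
  by apply/(has_nthP 0); exists l.
case: l kl h2 => // l kl h2; apply/orP; right; apply: IH; by exists k, l.
Qed.

Lemma has3P x t : reflect (exists j k l, [/\ j < k < l, l < size t, nth 0 t j < x,
   nth 0 t k < x & nth 0 t k < nth 0 t l]) (has3 x t).
Proof.
apply: (iffP idP).
  elim: t => //= y s IH /orP[/andP[yx /has2P[k [l [kl h1 h2]]]]|/IH[j [k [l [jkl ls h0 h1 h2]]]]].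
    by exists 0, k.+1, l.+1; split => //; case/andP: kl.
  by exists j.+1, k.+1, l.+1; split => //; rewrite !ltnS.
elim: t => [|y s IH] [j [k [l [jkl ls h0 h1 h2]]]] /=; first by move: ls; rewrite ltn0.
case: j jkl h0 => [|j] jkl h0.
  case: k jkl h1 h2 => // k; case: l ls => // l ls jkl h1 h2; apply/orP; left; rewrite h0 /=.
  by apply/has2P; exists k, l; split => //; move: jkl ls; rewrite /= !ltnS; lia.
case: k jkl h1 h2 => [|k]; first by case/andP; rewrite ltn0.
case: l ls => [|l]; first by move=> _ /andP[_]; rewrite ltn0.
move=> ls jkl h1 h2; apply/orP; right; apply: IH.
by exists j, k, l.
Qed.

Lemma nth_cons_pred (y : nat) s j : (0 < j)%N -> nth 0 (y :: s) j = nth 0 s j.-1.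
Proof. by case: j. Qed.

Lemma occP t : reflect (exists i j k l, [/\ i < j < k, k < l < size t,
   nth 0 t j < nth 0 t i, nth 0 t k < nth 0 t i & nth 0 t k < nth 0 t l]) (occ t).
Proof.
apply: (iffP idP).
  elim: t => //= y s IH /orP[/has3P[j [k [l [jkl ls h0 h1 h2]]]]|/IH[i [j [k [l [ijk kl h0 h1 h2]]]]]].
    by exists 0, j.+1, k.+1, l.+1; split => //; move: jkl ls; rewrite /=; lia.
  by exists i.+1, j.+1, k.+1, l.+1; split.
elim: t => [|y s IH] [i [j [k [l [ijk kl h0 h1 h2]]]]] /=.
  by move: kl; rewrite /=; lia.
have jp : (0 < j)%N by lia.
have kp : (0 < k)%N by lia.
have lp : (0 < l)%N by lia.
rewrite !(nth_cons_pred _ _ jp) !(nth_cons_pred _ _ kp) !(nth_cons_pred _ _ lp) in h0 h1 h2.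
case: i ijk h0 h1 => [|i] ijk h0 h1 /=.
  apply/orP; left; apply/has3P; exists j.-1, k.-1, l.-1; split => //; move: ijk kl => /=; lia.
apply/orP; right; apply: IH; exists i, j.-1, k.-1, l.-1; split => //; move: ijk kl => /=; lia.
Qed.


Definition word n (s : 'S_n) : seq nat := [seq val (s i) | i <- enum 'I_n].

Lemma size_word n (s : 'S_n) : size (word s) = n.
Proof. by rewrite size_map size_enum_ord. Qed.

Lemma nth_word n (s : 'S_n) (i : 'I_n) : nth 0 (word s) i = s i.
Proof.
rewrite (nth_map i) ?size_enum_ord //; congr (val (s _)).
by apply: val_inj; rewrite /= nth_enum_ord.
Qed.

Lemma word_inj n : injective (@word n).
Proof.
move=> s1 s2 e; apply/permP => i; apply: val_inj.
by have := congr1 (fun w => nth 0 w i) e; rewrite /= !nth_word.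
Qed.

Lemma word_perm n (s : 'S_n) : perm_eq (word s) (iota 0 n).
Proof.
apply: uniq_perm; first by rewrite map_inj_uniq ?enum_uniq // => a b /val_inj/perm_inj.
  exact: iota_uniq.
move=> x; rewrite mem_iota add0n /=; apply/mapP/idP => [[i _ ->]|xn].
  exact: ltn_ord.
exists ((s^-1)%g (Ordinal xn)); first by rewrite mem_enum.
by rewrite permKV.
Qed.

Lemma word_surj n t : perm_eq t (iota 0 n) -> exists s : 'S_n, word s = t.
Proof.
move=> pe.
have ut : uniq t by rewrite (perm_uniq pe) iota_uniq.
have st : size t = n by rewrite (perm_size pe) size_iota.
have ltn_t (i : 'I_n) : nth 0 t i < n.
  have : nth 0 t i \in t by rewrite mem_nth // st.
  by rewrite (perm_mem pe) mem_iota.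
pose g (i : 'I_n) : 'I_n := Ordinal (ltn_t i).
have ginj : injective g.
  move=> a b /(congr1 val) /= e; apply: val_inj.
  by apply/eqP; rewrite -(nth_uniq 0 _ _ ut) ?st ?ltn_ord // e.
exists (perm ginj); apply: (@eq_from_nth _ 0); first by rewrite size_word st.
move=> i; rewrite size_word => ilt.
by rewrite (nth_word _ (Ordinal ilt)) permE.
Qed.

Lemma card_count n (P : pred (seq nat)) :
  #|[set s : 'S_n | P (word s)]| = count P (permsn n (iota 0 n)).
Proof.
have pe : perm_eq (map (@word n) (enum 'S_n)) (permsn n (iota 0 n)).
  apply: uniq_perm.
  - by rewrite map_inj_uniq ?enum_uniq //; exact: word_inj.
  - exact/uniq_permsn/iota_uniq.
  move=> t; rewrite mem_permsn ?iota_uniq ?size_iota //.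
  apply/mapP/idP => [[s _ ->]|/word_surj[s <-]]; first exact: word_perm.
  by exists s; rewrite ?mem_enum.
rewrite -(seq.permP pe) count_map cardsE cardE /enum_mem size_filter.
by rewrite filter_predT; apply: eq_count => x; rewrite !inE.
Qed.

Lemma pop_occ n (s : 'S_n) : pop_contains 4 popP s = occ (word s).
Proof.
apply/idP/idP.
  case/existsP => f /andP[inc rel].
  have I (a b : 'I_4) : (a < b)%N -> (f a < f b)%N.
    by move=> h; move/forallP: inc => /(_ a) /forallP /(_ b) /implyP; apply.
  have R (a b : 'I_4) : ((a : nat).+1, (b : nat).+1) \in popP -> (s (f b) < s (f a))%N.
    by move=> h; move/forallP: rel => /(_ a) /forallP /(_ b) /implyP; apply.
  apply/occP; exists (f (@Ordinal 4 0 isT)), (f (@Ordinal 4 1 isT)),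
    (f (@Ordinal 4 2 isT)), (f (@Ordinal 4 3 isT)); rewrite size_word !nth_word.
  split.
  - by rewrite !I.
  - by rewrite I ?ltn_ord.
  - by apply: R.
  - by apply: R.
  - by apply: R.
case/occP => [i [j [k [l [/andP[ij jk] /andP[kl ln] h0 h1 h2]]]]].
rewrite size_word in ln.
have hi : (i < n)%N by lia.
have hj : (j < n)%N by lia.
have hk : (k < n)%N by lia.
pose oi := Ordinal hi; pose oj := Ordinal hj; pose ok := Ordinal hk; pose ol := Ordinal ln.
have ei : nth 0 (word s) i = s oi := nth_word s oi.
have ej : nth 0 (word s) j = s oj := nth_word s oj.
have ek : nth 0 (word s) k = s ok := nth_word s ok.
have el : nth 0 (word s) l = s ol := nth_word s ol.
rewrite ei ej ek el in h0 h1 h2.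
apply/existsP; exists [ffun a : 'I_4 => nth oi [:: oi; oj; ok; ol] a].
apply/andP; split; apply/forallP => a; apply/forallP => b; rewrite !ffunE.
  case: a => [[|[|[|[|a]]]] ha] //; case: b => [[|[|[|[|b]]]] hb] //=; lia.
case: a => [[|[|[|[|a]]]] ha] //; case: b => [[|[|[|[|b]]]] hb] //=.
Qed.


Lemma forall4 (P : 'I_4 -> bool) : [forall a, P a] =
  [&& P (@Ordinal 4 0 isT), P (@Ordinal 4 1 isT), P (@Ordinal 4 2 isT) & P (@Ordinal 4 3 isT)].
Proof.
apply/forallP/and4P => [h|[h0 h1 h2 h3] [[|[|[|[|a]]]] ha]]; first by split.
- by rewrite (_ : Ordinal ha = Ordinal (isT : 0 < 4)) //; apply: val_inj.
- by rewrite (_ : Ordinal ha = Ordinal (isT : 1 < 4)) //; apply: val_inj.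
- by rewrite (_ : Ordinal ha = Ordinal (isT : 2 < 4)) //; apply: val_inj.
- by rewrite (_ : Ordinal ha = Ordinal (isT : 3 < 4)) //; apply: val_inj.
- by [].
Qed.

Definition o4 (k : nat) (h : (k < 4)%N) : 'I_4 := Ordinal h.

Lemma key (g : 'I_4 -> nat) (inj : forall a b, a != b -> g a != g b) :
  [forall a : 'I_4, forall b : 'I_4, ((a.+1, b.+1) \in popP) ==> (g b < g a)] =
  [|| [forall a : 'I_4, forall b : 'I_4, (g a < g b) == (nth 0 [:: 4; 3; 1; 2] a < nth 0 [:: 4; 3; 1; 2] b)],
      [forall a : 'I_4, forall b : 'I_4, (g a < g b) == (nth 0 [:: 4; 2; 1; 3] a < nth 0 [:: 4; 2; 1; 3] b)],
      [forall a : 'I_4, forall b : 'I_4, (g a < g b) == (nth 0 [:: 3; 2; 1; 4] a < nth 0 [:: 3; 2; 1; 4] b)],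
      [forall a : 'I_4, forall b : 'I_4, (g a < g b) == (nth 0 [:: 4; 1; 2; 3] a < nth 0 [:: 4; 1; 2; 3] b)] |
      [forall a : 'I_4, forall b : 'I_4, (g a < g b) == (nth 0 [:: 3; 1; 2; 4] a < nth 0 [:: 3; 1; 2; 4] b)]].
Proof.
rewrite !forall4 /=.
have n01 := inj (o4 (isT : 0 < 4)) (o4 (isT : 1 < 4)) isT.
have n02 := inj (o4 (isT : 0 < 4)) (o4 (isT : 2 < 4)) isT.
have n03 := inj (o4 (isT : 0 < 4)) (o4 (isT : 3 < 4)) isT.
have n12 := inj (o4 (isT : 1 < 4)) (o4 (isT : 2 < 4)) isT.
have n13 := inj (o4 (isT : 1 < 4)) (o4 (isT : 3 < 4)) isT.
have n23 := inj (o4 (isT : 2 < 4)) (o4 (isT : 3 < 4)) isT.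
rewrite /o4 in n01 n02 n03 n12 n13 n23.
move: (g _) (g _) (g _) (g _) n01 n02 n03 n12 n13 n23.
move=> a b c d ? ? ? ? ? ?.
case: (ltngtP a b) => ?; case: (ltngtP a c) => ?; case: (ltngtP a d) => ?;
case: (ltngtP b c) => ?; case: (ltngtP b d) => ?; case: (ltngtP c d) => ?;
rewrite ?ltnn //=; lia.
Qed.

Lemma incr_inj n (s : 'S_n) (f : {ffun 'I_4 -> 'I_n}) : incr_pos f ->
  forall a b, a != b -> (fun a => nat_of_ord (s (f a))) a != (fun a => nat_of_ord (s (f a))) b.
Proof.
move=> inc a b ab /=; apply/negP => /eqP /val_inj /perm_inj fe.
have I (x y : 'I_4) : (x < y)%N -> (f x < f y)%N.
  by move=> h; move/forallP: inc => /(_ x) /forallP /(_ y) /implyP; apply.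
case: (ltngtP a b) => h.
- by have := I _ _ h; rewrite fe ltnn.
- by have := I _ _ h; rewrite fe ltnn.
- by move/negP: ab; apply; apply/eqP/val_inj.
Qed.

Lemma pattern_part n (s : 'S_n) :
  pop_avoids 4 popP s =
     [&& pat_avoids [:: 4; 3; 1; 2]%N s, pat_avoids [:: 4; 2; 1; 3]%N s,
         pat_avoids [:: 3; 2; 1; 4]%N s, pat_avoids [:: 4; 1; 2; 3]%N s &
         pat_avoids [:: 3; 1; 2; 4]%N s].
Proof.
rewrite /pop_avoids /pat_avoids -!negb_or; congr (~~ _).
rewrite /pop_contains /pat_contains.
set Q := fun (q : seq nat) (f : {ffun 'I_4 -> 'I_n}) =>
  [forall a : 'I_4, forall b : 'I_4, (s (f a) < s (f b))%N == (nth 0 q a < nth 0 q b)%N].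
transitivity [exists f : {ffun 'I_4 -> 'I_n}, incr_pos f &&
  [|| Q [:: 4; 3; 1; 2]%N f, Q [:: 4; 2; 1; 3]%N f, Q [:: 3; 2; 1; 4]%N f,
      Q [:: 4; 1; 2; 3]%N f | Q [:: 3; 1; 2; 4]%N f]].
  apply: eq_existsb => f; case incf: (incr_pos f) => //=.
  exact: (key (incr_inj s incf)).
apply/idP/idP.
  case/existsP => f /andP[inc hq]; apply/negPn/negP; rewrite !negb_or => /and5P[n1 n2 n3 n4 n5].
  case/orP: hq => [h|/orP[h|/orP[h|/orP[h|h]]]];
    [move/negP: n1|move/negP: n2|move/negP: n3|move/negP: n4|move/negP: n5];
    by apply; apply/existsP; exists f; rewrite inc /=; exact: h.
case/orP => [h|/orP[h|/orP[h|/orP[h|h]]]]; case/existsP: h => f /andP[inc h];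
  by apply/existsP; exists f; rewrite inc /Q h ?orbT.
Qed.

Unset Implicit Arguments.
Local Open Scope ring_scope.

Definition Aq (k : nat) : rat := (3 ^+ k - 2 * k%:R + 3) / 4.
Definition Bq (k : nat) : rat := (3 ^+ k.-1 + 1) / 2.
Definition hq (n al : nat) : rat :=
  if al == 0%N then Aq n else Aq (n - al).+1 + (al.-1)%:R * Bq (n - al).+1.

Lemma step_id (a j : nat) :
  Aq j.+2 + a%:R * Bq j.+2 - a.+1%:R * Aq j.+1 =
  Aq j.+1 + a.+1%:R * Bq j.+1 - a.+2%:R * Aq j + (Aq j.+1 + a%:R * Bq j.+1).
Proof.
rewrite /Aq /Bq /= !exprS -!natr1.
by field.
Qed.

Lemma sum_ind (n al : nat) (X : rat) :
  \sum_(r < n) (if (r < al)%N then X else 0) = (minn al n)%:R * X.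
Proof.
elim: n => [|n IH]; first by rewrite big_ord0 minn0 mul0r.
rewrite big_ord_recr /= IH.
have -> : minn al n.+1 = (minn al n + (n < al))%N by case: (ltnP n al) => h; lia.
by rewrite natrD mulrDl; case: (n < al)%N; rewrite ?mul1r ?mul0r ?addr0.
Qed.

Lemma T_step n al (Y : nat -> rat) : (al < n)%N ->
  \sum_(r < n) (if (r < al)%N then 0 else Y r) =
  \sum_(r < n) (if (r < al.+1)%N then 0 else Y r) + Y al.
Proof.
move=> h.
have -> : \sum_(r < n) (if (r < al)%N then 0 else Y r) =
  \sum_(r < n) ((if (r < al.+1)%N then 0 else Y r) + (if (r : nat) == al then Y al else 0)).
  apply: eq_bigr => r _; case: (ltngtP r al) => rl.
  - have f2 : (r < al.+1)%N by lia.
    have f3 : ((r : nat) == al) = false by apply/negbTE/eqP; lia.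
    by rewrite ?f2 ?f3 ?addr0.
  - have f1 : (r < al)%N = false by lia.
    have f2 : (r < al.+1)%N = false by lia.
    have f3 : ((r : nat) == al) = false by apply/negbTE/eqP; lia.
    by rewrite ?f1 ?f2 ?f3 ?addr0.
  - have f1 : (r < al)%N = false by lia.
    have f2 : (r < al.+1)%N = true by lia.
    by rewrite ?f1 ?f2 ?rl ?eqxx ?add0r.
rewrite big_split /=; congr (_ + _).
rewrite (bigD1 (Ordinal h)) //= eqxx big1 ?addr0 // => i ne.
rewrite ifF //; apply/negbTE; apply: contra ne => /eqP e; apply/eqP; exact: val_inj.
Qed.

Lemma Aq0 : Aq 0 = 1. Proof. by rewrite /Aq expr0; field. Qed.
Lemma Aq1 : Aq 1 = 1. Proof. by rewrite /Aq expr1; field. Qed.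
Lemma Bq1 : Bq 1 = 1. Proof. by rewrite /Bq expr0; field. Qed.

Lemma T_closed m al : (al <= m.+1)%N ->
  \sum_(r < m.+1) (if (r < al)%N then 0 else hq m r) = hq m.+1 al - al%:R * Aq (m.+1 - al).
Proof.
move=> h.
suff : forall d al, (al + d = m.+1)%N ->
  \sum_(r < m.+1) (if (r < al)%N then 0 else hq m r) = hq m.+1 al - al%:R * Aq (m.+1 - al).
  by move=> /(_ (m.+1 - al)%N al); apply; lia.
elim=> [|d IH] {h}al e.
  rewrite addn0 in e; subst al.
  rewrite big1 => [|r _]; last by rewrite ltn_ord.
  rewrite subnn Aq0 /hq /= subnn Aq1 Bq1; by rewrite -natr1 /=; ring.
have h : (al < m.+1)%N by lia.
rewrite (@T_step _ _ _ h) (IH al.+1); last by lia.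
case: al e h => [|a] e h.
  rewrite /hq /= !subn0 subn1 /=; by ring.
have e1 : (m.+1 - a.+1 = d.+1)%N by lia.
have e2 : (m.+1 - a.+2 = d)%N by lia.
have e3 : (m - a.+1 = d)%N by lia.
rewrite /hq /= e1 e2 e3.
have := step_id a d.
rewrite -natr1 => ->.
rewrite -natr1; ring.
Qed.

Lemma H_rec m al : (al <= m.+1)%N ->
  \sum_(r < m.+1) (if (r < al)%N then hq (m.+1 - al) 0 else hq m r) = hq m.+1 al.
Proof.
move=> h.
rewrite (eq_bigr (fun r : 'I_m.+1 => (if (r < al)%N then hq (m.+1 - al) 0 else 0) +
   (if (r < al)%N then 0 else hq m r))); last by move=> r _; case: ifP; rewrite ?addr0 ?add0r.
rewrite big_split /= sum_ind T_closed //.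
have -> : minn al m.+1 = al by lia.
rewrite /hq /=; ring.
Qed.


Lemma fcnt_closed n al be : (al <= n)%N -> (be <= n)%N ->
  (fcnt n al be)%:R = hq (n - be) (al - be).
Proof.
elim: n al be => [|m IH] al be ha hb.
  have -> : al = 0%N by lia.
  have -> : be = 0%N by lia.
  by rewrite /= /hq /= Aq0.
rewrite /= natr_sum.
pose G (r : nat) := if (r < be)%N && (r < m)%N then 0 else if (r < al)%N
  then hq (m - (maxn al be).-1) (0 - (maxn al be).-1)
  else hq (m - (be - (r < be))) (r - (be - (r < be))).
rewrite (eq_bigr (fun r : 'I_m.+1 => G r)); last first.
  move=> r _; rewrite /G; have rm := ltn_ord r.
  case: ifP => _ //; case: ifP => _; rewrite IH //; lia.
case: (ltnP m be) => hbm.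
  have ebe : be = m.+1 by lia.
  rewrite big_ord_recr /= big1 ?add0r => [|r _]; last first.
    by rewrite /G ebe ltn_ord (ltn_trans (ltn_ord r)) //= ltnS ltnW.
  rewrite /G ebe ltnn andbF ltnSn !subn1 /= subnn.
  have -> : (m.+1 - m.+1 = 0)%N by lia.
  have -> : (al - m.+1 = 0)%N by lia.
  have -> : (maxn al m.+1).-1 = m by lia.
  by rewrite subnn; case: ifP.
rewrite -(big_mkord xpredT G) (@big_cat_nat _ _ _ be) /=; last 2 first; [by [] | by lia |].
rewrite big1_seq ?add0r => [|r]; last first.
  rewrite mem_index_iota => rin; have rb : (r < be)%N by lia.
  have rm : (r < m)%N by lia.
  by rewrite /G rb rm.
rewrite -{1}(add0n be) big_addn.
have -> : (m.+1 - be = (m - be).+1)%N by lia.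
rewrite big_mkord -H_rec; last by lia.
apply: eq_bigr => r _; rewrite /G; have rm := ltn_ord r.
have -> : (r + be < be)%N = false by lia.
rewrite /=; case: ifP => h1.
  have -> : (r < al - be)%N by lia.
  have -> : (m - (maxn al be).-1 = (m - be).+1 - (al - be))%N by lia.
  by [].
have -> : (r < al - be)%N = false by lia.
by rewrite subn0 addnK.
Qed.


Lemma a_cnt_fcnt n : a_cnt n = fcnt n 0 0.
Proof.
rewrite /a_cnt.
have -> : [set s : 'S_n | pop_avoids 4 popP s] = [set s : 'S_n | (fun t => ~~ occ t) (word s)].
  by apply/setP => s; rewrite !inE /pop_avoids pop_occ.
rewrite (card_count n (fun t => ~~ occ t)).
have -> : count (fun t => ~~ occ t) (permsn n (iota 0 n)) = count (Pav 0 0) (permsn n (iota 0 n)).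
  by apply: eq_count => t; rewrite /Pav has3_0 has2_0 !andbT.
by rewrite count_Pav ?iota_uniq ?size_iota // /rk !count_pred0 ?rk0; congr fcnt; elim: (iota 0 n).
Qed.


Lemma a_cnt_Aq n : (a_cnt n)%:R = Aq n.
Proof. by rewrite a_cnt_fcnt fcnt_closed // !subn0 /hq. Qed.

Theorem theorem3p11 :
  (* avoiding p = avoiding 4312, 4213, 3214, 4123, 3124 *)
  (forall (n : nat) (s : 'S_n),
     pop_avoids 4 popP s =
     [&& pat_avoids [:: 4; 3; 1; 2]%N s, pat_avoids [:: 4; 2; 1; 3]%N s,
         pat_avoids [:: 3; 2; 1; 4]%N s, pat_avoids [:: 4; 1; 2; 3]%N s &
         pat_avoids [:: 3; 1; 2; 4]%N s]) /\
  (a_cnt 0 = 1%N /\ a_cnt 1 = 1%N) /\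
  (forall n : nat, (2 <= n)%N ->
     (a_cnt n)%:Z = 4 * (a_cnt n.-1)%:Z - 3 * (a_cnt n.-2)%:Z + 1) /\
  (forall n : nat,
     (a_cnt n)%:R = ((3 ^+ n - 2 * n%:R + 3) / 4 : rat)) /\
  (* formal power series identity  sum a(n) x^n = (1-2x)^2 / ((1-3x)(1-x)^2),
     i.e. (sum a(n) x^n) * (1-3x)(1-x)^2 = (1-2x)^2, checked coefficientwise
     via truncations *)
  (forall N i : nat, (i < N)%N ->
     ((\sum_(j < N) (a_cnt j)%:Z *: 'X^j) *
        ((1 - 3%:P * 'X) * (1 - 'X) ^+ 2) : {poly int})`_i
     = ((1 - 2%:P * 'X) ^+ 2 : {poly int})`_i).
Proof.
split; first exact: pattern_part.
have AN := a_cnt_Aq.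
have rec : forall m, (a_cnt m.+2 + 3 * a_cnt m = 4 * a_cnt m.+1 + 1)%N.
  move=> m; apply/eqP; rewrite -(eqr_nat rat) natrD [X in _ == X]natrD !natrM !AN; apply/eqP.
  rewrite /Aq !exprS -!natr1; by field.
split.
  by split; apply/eqP; rewrite -(eqr_nat rat) AN ?Aq0 ?Aq1.
split.
  move=> n n2; case: n n2 => [|[|m]] // _ /=; have := rec m; lia.
split; first by move=> n; rewrite AN.
move=> N i iN.
set p := \sum_(j < N) _.
have pE : forall k, (k < N)%N -> p`_k = (a_cnt k)%:Z.
  by move=> k kN; rewrite /p -(poly_def N (fun j => (a_cnt j)%:Z)) coef_poly kN.
have qE : (1 - 3%:P * 'X) * (1 - 'X) ^+ 2 = 1 - 'X *+ 5 + 'X^2 *+ 7 - 'X^3 *+ 3 :> {poly int}.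
  have e3 : (3%:P : {poly int}) = 3%:R by rewrite -polyC_natr.
  rewrite e3; ring.
have rE : (1 - 2%:P * 'X) ^+ 2 = 1 - 'X *+ 4 + 'X^2 *+ 4 :> {poly int}.
  have e2 : (2%:P : {poly int}) = 2%:R by rewrite -polyC_natr.
  rewrite e2; ring.
rewrite qE rE !mulrDr !mulrN mulr1 !mulrnAr !coefD !coefN !coefMn !coefMXn coefMX coef1 coefX !coefXn.
have a0 : a_cnt 0 = 1%N by apply/eqP; rewrite -(eqr_nat rat) AN Aq0.
have a1 : a_cnt 1 = 1%N by apply/eqP; rewrite -(eqr_nat rat) AN Aq1.
case: i iN => [|[|[|i]]] iN /=;
  rewrite ?subSS ?subn0 ?subnn !pE ?a0 ?a1 //; try lia.
  have e : (a_cnt 2)%:Z = 2%:Z by have := rec 0%N; clear -a0 a1; lia.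
  by rewrite e; ring.
have e3 : (a_cnt i.+3)%:Z = 4 * (a_cnt i.+2)%:Z - 3 * (a_cnt i.+1)%:Z + 1.
  by have := rec i.+1; clear; lia.
have e2 : (a_cnt i.+2)%:Z = 4 * (a_cnt i.+1)%:Z - 3 * (a_cnt i)%:Z + 1.
  by have := rec i; clear; lia.
by rewrite e3 e2; ring.
Qed.
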